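(* Let $b_1,r_1,b_2,r_2$ be positive integers with $b_1r_2-b_2r_1=1$, and suppose $n=xr_1+yr_2$ for some integers $x,y$ with $r_2\ge x>0$ and $r_1\ge y>0$. Then $$\Delta^n(b_1+b_2,r_1+r_2)=\Delta^n(b_1,r_1)+\Delta^n(b_2,r_2)-\min\{x,y\}.$$
   Context: For positive integers $b,r$ and an integer $j\ge 1$, let $\overline{jb}$ denote the residue of $jb$ modulo $r$ in $\{0,\dots,r-1\}$, and define $$\overline{M}^j(b,r)=\frac{\overline{jb}\,(r-\overline{jb})}{2r},\qquad M^j(b,r)=\frac{jb\,(r-jb)}{2r},\qquad \Delta^j(b,r)=\overline{M}^j(b,r)-M^j(b,r).$$ *)

(* Defs.v *)
From mathcomp Require Import all_boot all_order all_algebra.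
Set Implicit Arguments. Unset Strict Implicit. Unset Printing Implicit Defensive.
Import Order.TTheory GRing.Theory Num.Theory.
Local Open Scope ring_scope.

Definition resid (j b r : nat) : nat := (j * b) %% r.

Definition Mbar (j b r : nat) : rat :=
  ((resid j b r)%:R * ((r%:R : rat) - (resid j b r)%:R)) / (2 * r%:R).

Definition Mj (j b r : nat) : rat :=
  ((j * b)%:R * ((r%:R : rat) - (j * b)%:R)) / (2 * r%:R).

Definition Delta (j b r : nat) : rat := Mbar j b r - Mj j b r.

(* Main.v *)
Require Import Defs.
From mathcomp Require Import all_boot all_order all_algebra.
From mathcomp Require Import zify ring lra.
Import Order.TTheory GRing.Theory Num.Theory.
Local Open Scope ring_scope.

Lemma resA (N e R K : nat) : (0 < R)%N -> (e <= R)%N -> N = (e + R * K)%N ->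
  ((N %% R) * (R - N %% R) = e * (R - e))%N.
Proof.
move=> R0 eR ->.
case: (ltngtP e R) eR => // [eR _ | -> _].
  have -> : ((e + R * K) %% R = e)%N.
    by rewrite addnC [(R * K)%N]mulnC modnMDl modn_small.
  done.
have -> : ((R + R * K) %% R = 0)%N.
  by rewrite addnC [(R * K)%N]mulnC modnMDl modnn.
by rewrite subnn !muln0.
Qed.

Lemma resB (N e R K : nat) : (0 < e)%N -> (e <= R)%N -> (N + e = R * K)%N ->
  ((N %% R) * (R - N %% R) = e * (R - e))%N.
Proof.
move=> e0 eR H.
have R0 : (0 < R)%N by lia.
have := @div.divn_eq N R; set q := (N %/ R)%N; set z := (N %% R)%N => hN.
have zR : (z < R)%N by rewrite /z ltn_mod.
have hm : (z + e = R * (K - q))%N.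
  have : (q * R <= R * K)%N by lia.
  rewrite mulnC leq_pmul2l // => qK.
  rewrite mulnBr; lia.
move: hm; case: (K - q)%N => [|[|m]] hm; first lia.
  have -> : z = (R - e)%N by lia.
  have -> : (R - (R - e) = e)%N by lia.
  by rewrite mulnC.
nia.
Qed.

Lemma Mbar_eq (j b r e : nat) : (e <= r)%N ->
  ((resid j b r) * (r - resid j b r) = e * (r - e))%N ->
  (resid j b r <= r)%N ->
  Mbar j b r = (e%:R * ((r%:R : rat) - e%:R)) / (2 * r%:R).
Proof.
move=> er H hr; rewrite /Mbar -!natrB // -!natrM H //.
Qed.

Lemma resid_le j b r : (0 < r)%N -> (resid j b r <= r)%N.
Proof. by move=> r0; rewrite /resid ltnW // ltn_mod. Qed.

Theorem lemma2p3 (b1 r1 b2 r2 : nat) (x y : int) (n : nat) :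
  (0 < b1)%N -> (0 < r1)%N -> (0 < b2)%N -> (0 < r2)%N ->
  (b1%:Z * r2%:Z - b2%:Z * r1%:Z = 1) ->
  0 < x -> x <= r2%:Z -> 0 < y -> y <= r1%:Z ->
  n%:Z = x * r1%:Z + y * r2%:Z ->
  Delta n (b1 + b2) (r1 + r2) =
    Delta n b1 r1 + Delta n b2 r2 - (Num.min x y)%:~R.
Proof.
case: x => [X|X] //; case: y => [Y|Y] //.
move=> hb1 hr1 hb2 hr2 hdet hX hXr hY hYr hn.
have hb : (b1 * r2 = b2 * r1 + 1)%N by lia.
have hnn : n = (X * r1 + Y * r2)%N by lia.
have X0 : (0 < X)%N by lia.
have Y0 : (0 < Y)%N by lia.
have XR : (X <= r2)%N by lia.
have YR : (Y <= r1)%N by lia.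
have E1 : Mbar n b1 r1 = (Y%:R * ((r1%:R : rat) - Y%:R)) / (2 * r1%:R).
  apply: Mbar_eq => //; last exact: resid_le.
  apply: (@resA _ _ _ (X * b1 + Y * b2)%N) => //.
  rewrite hnn; nia.
have E2 : Mbar n b2 r2 = (X%:R * ((r2%:R : rat) - X%:R)) / (2 * r2%:R).
  apply: Mbar_eq => //; last exact: resid_le.
  apply: (@resB _ _ _ (X * b1 + Y * b2)%N) => //.
  rewrite /resid hnn; nia.
have hr0 : (r1%:R : rat) != 0 by rewrite pnatr_eq0 -lt0n.
have hr20 : (r2%:R : rat) != 0 by rewrite pnatr_eq0 -lt0n.
have hr120 : ((r1 + r2)%:R : rat) != 0 by rewrite pnatr_eq0 -lt0n addn_gt0 hr1.
have hB1 : (b1%:R : rat) = (1 + b2%:R * r1%:R) / r2%:R.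
  apply: (mulIf hr20); rewrite divfK //; have := congr1 (fun k : nat => (k%:R : rat)) hb; rewrite /= !natrM natrD => ->; by rewrite addrC natrM.

rewrite /Delta /Mj E1 E2.
case: (leqP X Y) => hXY.
  have E3 : Mbar n (b1 + b2) (r1 + r2) =
      ((Y - X)%N%:R * (((r1 + r2)%:R : rat) - (Y - X)%N%:R)) / (2 * (r1 + r2)%:R).
    apply: Mbar_eq; first lia; last by apply: resid_le; lia.
    apply: (@resA _ _ _ (X * (b1 + b2) + (Y - X) * b2)%N); first lia; first lia.
    rewrite hnn.
    have -> : (Y = X + (Y - X))%N by lia.
    rewrite addKn; nia.
  rewrite E3 (@min_l _ _ (Posz X)) ?lez_nat // natrB // !natrM !natrD hnn !natrD !natrM hB1.
  rewrite pmulrn /=.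
  field.
  by rewrite hr0 hr20 -natrD hr120.
have E3 : Mbar n (b1 + b2) (r1 + r2) =
    ((X - Y)%N%:R * (((r1 + r2)%:R : rat) - (X - Y)%N%:R)) / (2 * (r1 + r2)%:R).
  apply: Mbar_eq; first lia; last by apply: resid_le; lia.
  apply: (@resB _ _ _ (X * (b1 + b2) - (X - Y) * b2)%N); first lia; first lia.
  rewrite /resid hnn.
  have [D ->] : exists D, X = (Y + D)%N by exists (X - Y)%N; lia.
  rewrite addKn.
  have e1 : (D * r2 * b1 = D * b2 * r1 + D)%N.
    by rewrite -mulnA [(r2 * b1)%N]mulnC hb mulnDr muln1 mulnA.
  have h : (((Y + D) * r1 + Y * r2) * (b1 + b2) + D + (r1 + r2) * (D * b2)
            = (r1 + r2) * ((Y + D) * (b1 + b2)))%N.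
    move: e1; clear; nia.
  by rewrite mulnBr -h addnK.
have hm : Num.min (Posz X) (Posz Y) = Posz Y by apply: min_r; rewrite lez_nat ltnW.
rewrite E3 hm (natrB _ (ltnW hXY)) !natrM !natrD hnn !natrD !natrM hB1.
rewrite pmulrn /=.
field.
by rewrite hr0 hr20 -natrD hr120.
Qed.
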